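(* Let $\beta>0$, $f:[-1,1]\to\mathbb{R}$ any function, $g(r)=\frac12\log(1-r^2)+\frac{\beta^2}{2}(1-r^2)^2$ and $\tilde{\mathcal{B}}(\alpha,r)=f(r\alpha)+\sqrt2\beta r^2\sqrt{1-\alpha^2}+g(r)$. Then $r\mapsto\tilde{\mathcal{B}}(0,r)$ is strictly decreasing on $[0,1)$. *)

(* Defs.v *)
From Stdlib Require Import Reals.
Open Scope R_scope.

Definition g (beta r : R) : R :=
  / 2 * ln (1 - r ^ 2) + beta ^ 2 / 2 * (1 - r ^ 2) ^ 2.

Definition Btilde (f : R -> R) (beta alpha r : R) : R :=
  f (r * alpha) + sqrt 2 * beta * r ^ 2 * sqrt (1 - alpha ^ 2) + g beta r.

(* Main.v *)
Require Import Defs.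
From Stdlib Require Import Reals Lra.
From Coquelicot Require Import Coquelicot.
Open Scope R_scope.
Lemma ln_bound x : 1 < x -> 2*(x-1)/(x+1) < ln x.
Proof.
intros Hx.
set (psi := fun y => ln y - 2*(y-1)/(y+1)).
destruct (MVT_cor2 psi (fun y => /y - 4/(y+1)^2) 1 x Hx) as [c [Hc Hc2]].
- intros c Hc. apply is_derive_Reals. unfold psi. auto_derive.
  + repeat split; lra.
  + field. lra.
- assert (psi x - psi 1 > 0).
  { rewrite Hc. apply Rmult_lt_0_compat; [|lra].
    replace (/ c - 4 / (c + 1) ^ 2) with ((c-1)^2/(c*(c+1)^2)) by (field; lra).
    apply Rdiv_lt_0_compat. nra. apply Rmult_lt_0_compat; nra. }
  unfold psi in H. rewrite ln_1 in H. 
  replace (2*(1-1)/(1+1)) with 0 in H by field. lra.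
Qed.
Theorem lemma5p4 (beta : R) (f : R -> R) (hbeta : 0 < beta) :
  forall r1 r2 : R, 0 <= r1 -> r1 < r2 -> r2 < 1 ->
    Btilde f beta 0 r2 < Btilde f beta 0 r1.
Proof.
intros r1 r2 H1 H12 H2.
unfold Btilde, g. rewrite !Rmult_0_r.
replace (1 - 0^2) with 1 by ring. rewrite sqrt_1.
set (t1 := 1 - r1^2). set (t2 := 1 - r2^2).
assert (Ht : 0 < t2 < t1) by (unfold t1, t2; nra).
assert (HL : 2*(t1-t2)/(t1+t2) < ln t1 - ln t2).
{ rewrite <- ln_div by lra.
  replace (2*(t1-t2)/(t1+t2)) with (2*(t1/t2-1)/(t1/t2+1)) by (field; lra).
  apply ln_bound. apply (Rmult_lt_reg_r t2); [lra|]. field_simplify; lra. }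
assert (Hs : sqrt 2 * sqrt 2 = 2) by (apply sqrt_sqrt; lra).
set (s := sqrt 2) in *. clearbody s.
assert (Hq : 0 <= (beta*(t1+t2) - s)^2/(t1+t2)).
{ apply Rdiv_le_0_compat; [apply pow2_ge_0|lra]. }
assert (Eq : (beta*(t1+t2) - s)^2/(t1+t2) = s*s/(t1+t2) - 2*s*beta + beta^2*(t1+t2)) by (field; lra).
rewrite Eq, Hs in Hq.
assert (E : 2*(t1-t2)/(t1+t2) = (t1-t2)*(2/(t1+t2))) by (field; lra).
replace (r1^2) with (1-t1) by (unfold t1; ring).
replace (r2^2) with (1-t2) by (unfold t2; ring).
set (w := 2/(t1+t2)) in *.
assert (P : 0 <= (t1-t2)*(w - 2*s*beta + beta^2*(t1+t2))) by (apply Rmult_le_pos; lra).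
nra.
Qed.
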